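(* Let $G$ be a group with Property RD with respect to a length function $l$, and let $h\in G$ be any element (not necessarily of finite order). For $m\ge0$ let $n_m=|\{g\in C(h): l(g)=m\}|$, and assume $(n_m)$ does not grow polynomially: for every polynomial $P$ there are infinitely many $m$ with $n_m>P(m)$. Then every bounded trace $\tau:C^*_{\mathrm{red}}G\to\mathbb{C}$ satisfies $\tau(h)=0$.
   Context: A length function on $G$ is $l:G\to\mathbb{Z}_{\ge0}$ with $l(fg)\le l(f)+l(g)$, $l(g^{-1})=l(g)$, $l(e)=0$, and $l^{-1}(S)$ finite for finite $S$. $\|\sum c_g g\|_{H^s}^2=\sum|c_g|^2(1+l(g))^{2s}$, and $H^s(G)$ is the completion of $\mathbb{C}G$ in this norm. $G$ has Property RD with respect to $l$ if there are constants $C,s$ with $\|x\|_{C^*_{\mathrm{red}}G}\le C\|x\|_{H^s}$ for all $x\in\mathbb{C}G$. $C(h)$ is the conjugacy class of $h$. A trace is a bounded linear functional $\tau$ with $\tau(ab)=\tau(ba)$. *)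

(* Defs.v *)
From Stdlib Require Import Reals List.
From Stdlib Require Import ClassicalEpsilon.
Import ListNotations.
Open Scope R_scope.

Definition Cx : Type := (R * R)%type.
Definition C0 : Cx := (0, 0).
Definition C1 : Cx := (1, 0).
Definition Cadd (z w : Cx) : Cx := (fst z + fst w, snd z + snd w).
Definition Cmul (z w : Cx) : Cx :=
  (fst z * fst w - snd z * snd w, fst z * snd w + snd z * fst w).
Definition Cnorm2 (z : Cx) : R := fst z * fst z + snd z * snd z.
Definition Cmod (z : Cx) : R := sqrt (Cnorm2 z).

Definition is_group {G : Type} (mul : G -> G -> G) (inv : G -> G) (e : G) : Prop :=
  (forall a b c, mul a (mul b c) = mul (mul a b) c) /\
  (forall a, mul e a = a) /\ (forall a, mul a e = a) /\
  (forall a, mul (inv a) a = e) /\ (forall a, mul a (inv a) = e).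

(* Length function l : G -> Z_{>=0} (here nat), with finite preimages of
   finite sets. *)
Definition is_length_function {G : Type} (mul : G -> G -> G) (inv : G -> G) (e : G)
  (l : G -> nat) : Prop :=
  (forall f g, (l (mul f g) <= l f + l g)%nat) /\
  (forall g, l (inv g) = l g) /\
  l e = 0%nat /\
  (forall S : list nat, exists L : list G, forall g, In (l g) S -> In g L).

Definition rsum {G : Type} (f : G -> R) (L : list G) : R :=
  fold_right (fun g acc => f g + acc) 0 L.
Definition csum {G : Type} (f : G -> Cx) (L : list G) : Cx :=
  fold_right (fun g acc => Cadd (f g) acc) C0 L.

(* ---------- the group algebra CG ----------
   An element of CG is a function x : G -> C together with a duplicate-free
   list S containing its support. *)
Definition fin_supp {G : Type} (x : G -> Cx) (S : list G) : Prop :=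
  NoDup S /\ forall g, x g <> C0 -> In g S.

Definition conv {G : Type} (mul : G -> G -> G) (inv : G -> G)
  (S : list G) (x y : G -> Cx) : G -> Cx :=
  fun g => csum (fun a => Cmul (x a) (y (mul (inv a) g))) S.

Definition fadd {G : Type} (x y : G -> Cx) : G -> Cx := fun g => Cadd (x g) (y g).
Definition fscal {G : Type} (c : Cx) (x : G -> Cx) : G -> Cx := fun g => Cmul c (x g).

Definition delta {G : Type} (h : G) : G -> Cx :=
  fun g => if excluded_middle_informative (g = h) then C1 else C0.

Definition l2sq {G : Type} (xi : G -> Cx) (T : list G) : R :=
  rsum (fun g => Cnorm2 (xi g)) T.

Definition Hs_sq {G : Type} (l : G -> nat) (s : R) (x : G -> Cx) (S : list G) : R :=
  rsum (fun g => Cnorm2 (x g) * Rpower (1 + INR (l g)) (2 * s)) S.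

(* "||x * xi||_2 <= M ||xi||_2 for all finitely supported xi", i.e. the
   operator norm of left convolution by x on l^2(G) (= ||x||_{C*_red G}) is
   at most M.  The l^2 norm of the (finitely supported) function x * xi is
   expressed as the supremum of its partial sums over finite sets U. *)
Definition red_norm_le {G : Type} (mul : G -> G -> G) (inv : G -> G)
  (x : G -> Cx) (S : list G) (M : R) : Prop :=
  0 <= M /\
  forall (xi : G -> Cx) (T : list G), fin_supp xi T ->
  forall U : list G, NoDup U ->
    l2sq (conv mul inv S x xi) U <= M ^ 2 * l2sq xi T.

Definition property_RD {G : Type} (mul : G -> G -> G) (inv : G -> G)
  (l : G -> nat) : Prop :=
  exists (C s : R), 0 <= C /\
    forall (x : G -> Cx) (S : list G), fin_supp x S ->
      red_norm_le mul inv x S (C * sqrt (Hs_sq l s x S)).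

(* A bounded trace on C*_red G, given by its (unique-extension-determining)
   restriction to the dense subalgebra CG: a C-linear functional on CG,
   bounded for the reduced C*-norm, with tau(xy) = tau(yx). *)
Definition bounded_trace {G : Type} (mul : G -> G -> G) (inv : G -> G)
  (tau : (G -> Cx) -> Cx) : Prop :=
  (forall x y S T, fin_supp x S -> fin_supp y T ->
     tau (fadd x y) = Cadd (tau x) (tau y)) /\
  (forall c x S, fin_supp x S -> tau (fscal c x) = Cmul c (tau x)) /\
  (forall x y S T, fin_supp x S -> fin_supp y T ->
     tau (conv mul inv S x y) = tau (conv mul inv T y x)) /\
  (exists K : R, 0 <= K /\
     forall x S, fin_supp x S ->
     forall M, red_norm_le mul inv x S M -> Cmod (tau x) <= K * M).

Definition conjugate {G : Type} (mul : G -> G -> G) (inv : G -> G) (g h : G) : Prop :=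
  exists k, g = mul (mul k h) (inv k).

Definition has_card {G : Type} (P : G -> Prop) (n : nat) : Prop :=
  exists L : list G, NoDup L /\ length L = n /\ (forall g, In g L <-> P g).

(* real polynomial given by its coefficient list [a0; a1; ...] *)
Definition poly_eval (p : list R) (t : R) : R :=
  fold_right (fun a acc => a + t * acc) 0 p.

Definition n_m {G : Type} (mul : G -> G -> G) (inv : G -> G) (l : G -> nat)
  (h : G) (m n : nat) : Prop :=
  has_card (fun g => conjugate mul inv g h /\ l g = m) n.

Definition not_poly_growth {G : Type} (mul : G -> G -> G) (inv : G -> G)
  (l : G -> nat) (h : G) : Prop :=
  forall (P : list R) (N : nat), exists m n,
    (N <= m)%nat /\ n_m mul inv l h m n /\ INR n > poly_eval P (INR m).

(* Main.v *)
Require Import Defs.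
From Stdlib Require Import Reals List Lra Lia.
From Stdlib Require Import FunctionalExtensionality Classical ClassicalEpsilon.
Import ListNotations.
Open Scope R_scope.

Lemma Cx_eq (a b : Cx) : fst a = fst b -> snd a = snd b -> a = b.
Proof. destruct a, b; simpl; intros; subst; reflexivity. Qed.

Section S.
Variables (G : Type) (mul : G -> G -> G) (inv : G -> G) (e : G).
Hypothesis HG : is_group mul inv e.

Lemma fin_delta (a : G) : fin_supp (delta a) [a].
Proof.
  split. constructor. simpl; tauto. constructor.
  intros g Hg. unfold delta in Hg. destruct (excluded_middle_informative (g = a)).
  subst; simpl; auto. congruence.
Qed.

Lemma conv_delta (a b : G) : conv mul inv [a] (delta a) (delta b) = delta (mul a b).
Proof.
  destruct HG as [As [Le [Re [Li Ri]]]].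
  apply functional_extensionality; intro g.
  unfold conv, csum; simpl. unfold delta at 1.
  destruct (excluded_middle_informative (a = a)); [|congruence].
  unfold delta.
  destruct (excluded_middle_informative (mul (inv a) g = b)) as [E|E];
  destruct (excluded_middle_informative (g = mul a b)) as [F|F].
  - apply Cx_eq; unfold Cadd, Cmul, Defs.C1, C0; simpl; ring.
  - exfalso; apply F; subst b. rewrite As, Ri, Le; reflexivity.
  - exfalso; apply E; subst g. rewrite As, Li, Le; reflexivity.
  - apply Cx_eq; unfold Cadd, Cmul, Defs.C1, C0; simpl; ring.
Qed.

Variable tau : (G -> Cx) -> Cx.
Hypothesis Htau : bounded_trace mul inv tau.

Lemma tau_conj (g h : G) : conjugate mul inv g h -> tau (delta g) = tau (delta h).
Proof.
  intros [k Hk]. destruct Htau as [_ [_ [Tr _]]].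
  destruct HG as [As [Le [Re [Li Ri]]]].
  assert (E1 : g = mul k (mul h (inv k))) by (rewrite As; exact Hk).
  assert (E2 : h = mul (mul h (inv k)) k) by (rewrite <- As, Li, Re; reflexivity).
  rewrite E1, <- conv_delta. rewrite (Tr _ _ _ _ (fin_delta _) (fin_delta _)).
  rewrite conv_delta, <- E2; reflexivity.
Qed.

Definition ind (L : list G) : G -> Cx :=
  fun g => if excluded_middle_informative (In g L) then Defs.C1 else C0.

Lemma fin_ind L : NoDup L -> fin_supp (ind L) L.
Proof.
  intros N; split; auto. intros g Hg; unfold ind in Hg.
  destruct (excluded_middle_informative (In g L)); auto. congruence.
Qed.

Lemma tau_ind (c : Cx) L : NoDup L -> (forall g, In g L -> tau (delta g) = c) ->
  tau (ind L) = (INR (length L) * fst c, INR (length L) * snd c).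
Proof.
  destruct Htau as [Ad [Sc _]].
  induction L as [|a L IH]; intros N Hc.
  - assert (Z : ind [] = fscal C0 (ind [])).
    { apply functional_extensionality; intro g; unfold ind, fscal.
      destruct (excluded_middle_informative (In g [])) as [i|]; [destruct i|].
      apply Cx_eq; unfold Cmul, C0; simpl; ring. }
    rewrite Z, (Sc _ _ [] (fin_ind [] (NoDup_nil _))).
    apply Cx_eq; unfold Cmul, C0; simpl; ring.
  - inversion N; subst.
    assert (Z : ind (a :: L) = fadd (delta a) (ind L)).
    { apply functional_extensionality; intro g; unfold ind, fadd, delta.
      destruct (excluded_middle_informative (In g (a :: L))) as [i|i];
      destruct (excluded_middle_informative (g = a)) as [j|j];
      destruct (excluded_middle_informative (In g L)) as [k|k].
      all: try (subst; contradiction).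
      all: try (exfalso; apply i; simpl; tauto).
      all: try (exfalso; destruct i; [congruence|contradiction]).
      all: try (exfalso; apply i; subst; simpl; tauto).
      all: apply Cx_eq; unfold Cadd, Defs.C1, C0; simpl; ring. }
    rewrite Z, (Ad _ _ _ _ (fin_delta a) (fin_ind L H2)), IH; auto.
    2: intros; apply Hc; simpl; auto.
    rewrite (Hc a) by (simpl; auto).
    apply Cx_eq; rewrite length_cons, S_INR; simpl; ring.
Qed.
End S.

Lemma rsum_const {G : Type} (f : G -> R) (v : R) L :
  (forall g, In g L -> f g = v) -> rsum f L = INR (length L) * v.
Proof.
  induction L as [|a L IH]; intros H. simpl; ring.
  rewrite length_cons, S_INR. change (rsum f (a :: L)) with (f a + rsum f L). rewrite IH; [rewrite H; [ring|simpl; auto] | intros; apply H; simpl; auto].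
Qed.

Lemma eval_mono (B t : R) k : poly_eval (repeat 0 k ++ [B]) t = t ^ k * B.
Proof. induction k; simpl. ring. rewrite IHk; ring. Qed.

Lemma pow_bound (t : R) d : 0 <= t -> (1 + t) ^ d <= 2 ^ d * (1 + t ^ d).
Proof.
  intros Ht. assert (0 <= t ^ d) by (apply pow_le; lra).
  assert (0 < 2 ^ d) by (apply pow_lt; lra).
  destruct (Rle_dec t 1).
  - assert ((1+t)^d <= 2^d) by (apply pow_incr; lra). nra.
  - assert ((1+t)^d <= (2*t)^d) by (apply pow_incr; lra).
    rewrite Rpow_mult_distr in H1. nra.
Qed.

Theorem mainTheorem5 (G : Type) (mul : G -> G -> G) (inv : G -> G) (e : G)
  (l : G -> nat) (h : G)
  (HG : is_group mul inv e)
  (Hl : is_length_function mul inv e l)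
  (HRD : property_RD mul inv l)
  (Hgrowth : not_poly_growth mul inv l h)
  (tau : (G -> Cx) -> Cx)
  (Htau : bounded_trace mul inv tau) :
  tau (delta h) = C0.
Proof.
  destruct (classic (tau (delta h) = C0)) as [|Hne]; auto. exfalso.
  set (c := tau (delta h)) in *.
  set (q := Cnorm2 c).
  assert (Hq : 0 < q).
  { unfold q, Cnorm2. destruct c as [a b]; simpl.
    destruct (Req_dec a 0); destruct (Req_dec b 0).
    - subst; exfalso; apply Hne; reflexivity.
    - nra. - nra. - nra. }
  destruct HRD as [C [s [HC HR]]].
  pose proof Htau as Htau0. destruct Htau0 as [_ [_ [_ [K [HK Hb]]]]].
  destruct (INR_unbounded (2 * s)) as [d0 Hd0].
  set (d := S d0).
  set (A := K * K * (C * C) / q).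
  assert (HA : 0 <= A) by (unfold A; apply Rmult_le_pos; [nra | left; apply Rinv_0_lt_compat; lra]).
  set (B := (A + 1) * 2 ^ d).
  destruct (Hgrowth (B :: repeat 0 d0 ++ [B]) 0%nat) as [m [n [_ [[L [ND [Len Hin]]] Hgt]]]].
  replace (poly_eval (B :: repeat 0 d0 ++ [B]) (INR m)) with (B * (1 + INR m ^ d)) in Hgt
    by (simpl; rewrite eval_mono; unfold d; simpl; ring).
  assert (Hall : forall g, In g L -> tau (delta g) = c)
    by (intros g Hg; apply (tau_conj G mul inv e HG tau Htau); apply Hin; auto).
  pose proof (tau_ind G mul inv tau Htau c L ND Hall) as Ht.
  rewrite Len in Ht.
  set (Rp := Rpower (1 + INR m) (2 * s)).
  assert (HRp : 0 < Rp) by (unfold Rp, Rpower; apply exp_pos).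
  assert (HHs : Hs_sq l s (ind G L) L = INR n * Rp).
  { unfold Hs_sq. rewrite <- Len. apply rsum_const. intros g Hg.
    unfold ind. destruct (excluded_middle_informative (In g L)); [|contradiction].
    assert (l g = m) by (apply Hin; auto). rewrite H. unfold Cnorm2, Defs.C1, Rp; simpl. ring. }
  pose proof (HR _ _ (fin_ind G L ND)) as Hr.
  pose proof (Hb _ _ (fin_ind G L ND) _ Hr) as Hbd.
  rewrite HHs, Ht in Hbd. unfold Cmod in Hbd.
  set (N := INR n) in *.
  assert (HN : 0 <= N) by apply pos_INR.
  assert (E : Cnorm2 (N * fst c, N * snd c) = N * N * q) by (unfold q, Cnorm2; cbn [fst snd]; ring).
  rewrite E in Hbd.
  assert (Hsq : N * N * q <= K * K * (C * C) * (N * Rp)).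
  { assert (0 <= N * N * q) by (apply Rmult_le_pos; nra).
    assert (0 <= N * Rp) by nra.
    pose proof (sqrt_pos (N * N * q)).
    pose proof (sqrt_sqrt _ H). pose proof (sqrt_sqrt _ H0).
    pose proof (sqrt_pos (N * Rp)).
    assert (0 <= K * (C * sqrt (N * Rp))) by (apply Rmult_le_pos; auto; apply Rmult_le_pos; auto).
    assert (sqrt (N*N*q) * sqrt (N*N*q) <= (K * (C * sqrt (N * Rp))) * (K * (C * sqrt (N * Rp))))
      by (apply Rmult_le_compat; auto).
    rewrite H2 in H6. replace (K * (C * sqrt (N * Rp)) * (K * (C * sqrt (N * Rp)))) with (K * K * (C * C) * (sqrt (N * Rp) * sqrt (N * Rp))) in H6 by ring. rewrite H3 in H6. exact H6. }
  assert (Hn1 : N <= A * Rp).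
  { destruct (Req_dec N 0). rewrite H; nra.
    assert (N * q <= K * K * (C * C) * Rp).
    { apply Rmult_le_reg_l with N; [lra|]. nra. }
    unfold A. apply Rmult_le_reg_r with q; auto.
    replace (K * K * (C * C) / q * Rp * q) with (K * K * (C * C) * Rp) by (field; lra). lra. }
  assert (HRd : Rp <= (1 + INR m) ^ d).
  { unfold Rp. rewrite <- Rpower_pow by (pose proof (pos_INR m); lra).
    apply Rle_Rpower. pose proof (pos_INR m); lra. unfold d; rewrite S_INR; lra. }
  pose proof (pow_bound (INR m) d (pos_INR m)).
  assert (0 <= 2 ^ d * (1 + INR m ^ d)).
  { apply Rmult_le_pos. apply pow_le; lra. pose proof (pow_le (INR m) d (pos_INR m)); lra. }
  assert (N <= A * (2 ^ d * (1 + INR m ^ d))).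
  { apply Rle_trans with (A * Rp); auto. apply Rmult_le_compat_l; auto. lra. }
  unfold B in Hgt. nra.
Qed.
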